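(* The family $\{\varphi_{[1],0}[\cdot-2l]\}_{l=0}^{N/2-1}\cup\{\varphi_{[1],1}[\cdot-2l]\}_{l=0}^{N/2-1}$ is an orthonormal basis of $\Pi[N]$. Consequently, for $\mu\in\{0,1\}$, letting $\mathcal C^{\mu}$ be the linear span of $\{\varphi_{[1],\mu}[\cdot-2l]\}_{l=0}^{N/2-1}$, the space $\mathcal C^{1}$ is the orthogonal complement of $\mathcal C^{0}$ in $\Pi[N]$, and the orthogonal projection of any $x\in\Pi[N]$ onto $\mathcal C^{\mu}$ is $$x^{\mu}[k]=\sum_{l=0}^{N/2-1}c^{\mu}[l]\,\varphi_{[1],\mu}[k-2l],\qquad c^{\mu}[l]=\langle x,\varphi_{[1],\mu}[\cdot-2l]\rangle=\sum_{k=0}^{N-1}\varphi_{[1],\mu}[k-2l]\,x[k].$$ Here the DFTs are explicitly $\hat\varphi_{[1],0}[n]=-i\beta[n]$ ($0<n<N/2$), $i\beta[n]$ ($N/2<n<N$), $\sqrt2$ ($n=0$), $0$ ($n=N/2$); and $\hat\varphi_{[1],1}[n]=-i\alpha[n]$ ($0<n<N/2$), $i\alpha[n]$ ($N/2<n<N$), $0$ ($n=0$), $-\sqrt2$ ($n=N/2$).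
   Context: Let $N=2^{J}$ with $J\ge 1$ an integer and $\omega=e^{2\pi i/N}$. $\Pi[N]$ denotes the real vector space of real-valued $N$-periodic sequences $x=\{x[k]\}_{k\in\mathbb Z}$, with inner product $\langle x,y\rangle=\sum_{k=0}^{N-1}x[k]y[k]$. The DFT of an $N$-periodic sequence is $\hat x[n]=\sum_{k=0}^{N-1}x[k]\omega^{-kn}$, with inverse $x[k]=\frac1N\sum_{n=0}^{N-1}\hat x[n]\omega^{kn}$. Fix an integer $r\ge1$; let $U[n]=\tfrac12\big(\cos^{4r}\tfrac{\pi n}{N}+\sin^{4r}\tfrac{\pi n}{N}\big)$, $\beta[n]=\cos^{2r}\tfrac{\pi n}{N}/\sqrt{U[n]}$, $\alpha[n]=\omega^{n}\sin^{2r}\tfrac{\pi n}{N}/\sqrt{U[n]}$. The first-level wavelet packets $\psi_{[1],0},\psi_{[1],1}\in\Pi[N]$ have DFTs $\hat\psi_{[1],0}=\beta$, $\hat\psi_{[1],1}=\alpha$. Known fact (may be assumed): $\{\psi_{[1],\mu}[\cdot-2l]:\mu\in\{0,1\},\,0\le l<N/2\}$ is an orthonormal basis of $\Pi[N]$. The complementary wavelet packets $\varphi_{[1],\mu}\in\Pi[N]$ are defined by DFT $\hat\varphi_{[1],\mu}[n]=-i\hat\psi_{[1],\mu}[n]$ for $0<n<N/2$, $=i\hat\psi_{[1],\mu}[n]$ for $N/2<n<N$, and $=\hat\psi_{[1],\mu}[n]$ for $n\in\{0,N/2\}$ (indices mod $N$). *)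

(* Defs.v *)
From Stdlib Require Import Reals Lra Lia ZArith Bool.
Open Scope R_scope.

Definition Cx : Type := (R * R)%type.
Definition Cadd (z w : Cx) : Cx := (fst z + fst w, snd z + snd w).
Definition Cmul (z w : Cx) : Cx :=
  (fst z * fst w - snd z * snd w, fst z * snd w + snd z * fst w).
Definition Cscal (a : R) (z : Cx) : Cx := (a * fst z, a * snd z).
Definition Czero : Cx := (0, 0).
Definition Cmul_negi (z : Cx) : Cx := (snd z, - fst z).
Definition Cmul_i (z : Cx) : Cx := (- snd z, fst z).
Definition cis (t : R) : Cx := (cos t, sin t).

Fixpoint rsum (n : nat) (f : nat -> R) : R :=
  match n with O => 0 | S m => rsum m f + f m end.
Fixpoint csum (n : nat) (f : nat -> Cx) : Cx :=
  match n with O => Czero | S m => Cadd (csum m f) (f m) end.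

Definition Nn (J : nat) : nat := (2 ^ J)%nat.
Definition NZ (J : nat) : Z := Z.of_nat (Nn J).
Definition NR (J : nat) : R := INR (Nn J).
Definition Nhalf (J : nat) : nat := (Nn J / 2)%nat.

Definition omega_pow (J : nat) (m : Z) : Cx := cis (2 * PI * IZR m / NR J).

(* Pi[N]: real-valued N-periodic sequences indexed by Z *)
Definition periodic (J : nat) (x : Z -> R) : Prop :=
  forall k : Z, x (k + NZ J)%Z = x k.

Definition ip (J : nat) (x y : Z -> R) : R :=
  rsum (Nn J) (fun k => x (Z.of_nat k) * y (Z.of_nat k)).

Definition Ufun (J r : nat) (n : Z) : R :=
  / 2 * (cos (PI * IZR n / NR J) ^ (4 * r) + sin (PI * IZR n / NR J) ^ (4 * r)).
Definition beta (J r : nat) (n : Z) : R :=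
  cos (PI * IZR n / NR J) ^ (2 * r) / sqrt (Ufun J r n).
Definition alpha (J r : nat) (n : Z) : Cx :=
  Cscal (sin (PI * IZR n / NR J) ^ (2 * r) / sqrt (Ufun J r n)) (omega_pow J n).

(* DFTs of the first-level wavelet packets psi_[1],mu  (mu = 0 or 1) *)
Definition psihat (J r mu : nat) (n : Z) : Cx :=
  if Nat.eqb mu 0 then (beta J r n, 0) else alpha J r n.

(* DFTs of the complementary wavelet packets phi_[1],mu (indices mod N) *)
Definition phihat (J r mu : nat) (n : Z) : Cx :=
  let m := Z.modulo n (NZ J) in
  let h := Z.of_nat (Nhalf J) in
  if andb (0 <? m)%Z (m <? h)%Z then Cmul_negi (psihat J r mu n)
  else if (h <? m)%Z then Cmul_i (psihat J r mu n)
  else psihat J r mu n.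

Definition idft (J : nat) (yhat : Z -> Cx) (k : Z) : Cx :=
  Cscal (/ NR J) (csum (Nn J) (fun n => Cmul (yhat (Z.of_nat n)) (omega_pow J (k * Z.of_nat n)))).

(* The wavelet packets as real sequences (real parts of the inverse DFT;
   the theorem below also asserts that the imaginary parts of phi vanish). *)
Definition psi (J r mu : nat) (k : Z) : R := fst (idft J (psihat J r mu) k).
Definition phi (J r mu : nat) (k : Z) : R := fst (idft J (phihat J r mu) k).

Definition shift2 (f : Z -> R) (l : nat) : Z -> R :=
  fun k => f (k - 2 * Z.of_nat l)%Z.

Definition is_ONB2 (J : nat) (f : nat -> Z -> R) : Prop :=
  (forall mu l, (mu <= 1)%nat -> periodic J (shift2 (f mu) l)) /\
  (forall mu mu' l l', (mu <= 1)%nat -> (mu' <= 1)%nat ->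
     (l < Nhalf J)%nat -> (l' < Nhalf J)%nat ->
     ip J (shift2 (f mu) l) (shift2 (f mu') l') =
       (if andb (Nat.eqb mu mu') (Nat.eqb l l') then 1 else 0)) /\
  (forall x : Z -> R, periodic J x ->
     exists c0 c1 : nat -> R, forall k : Z,
       x k = rsum (Nhalf J) (fun l => c0 l * shift2 (f 0%nat) l k)
           + rsum (Nhalf J) (fun l => c1 l * shift2 (f 1%nat) l k)).

Definition in_C (J r mu : nat) (x : Z -> R) : Prop :=
  exists c : nat -> R, forall k : Z,
    x k = rsum (Nhalf J) (fun l => c l * phi J r mu (k - 2 * Z.of_nat l)%Z).

Definition coef (J r mu : nat) (x : Z -> R) (l : nat) : R :=
  rsum (Nn J) (fun k => phi J r mu (Z.of_nat k - 2 * Z.of_nat l)%Z * x (Z.of_nat k)).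
Definition proj (J r mu : nat) (x : Z -> R) (k : Z) : R :=
  rsum (Nhalf J) (fun l => coef J r mu x l * phi J r mu (k - 2 * Z.of_nat l)%Z).

(* Main.v *)
Require Import Defs.
From Stdlib Require Import Reals Lra Lia ZArith Field.
Open Scope R_scope.

Module MX.
From mathcomp Require Import all_boot all_algebra.
From mathcomp Require Import Rstruct.
Import GRing.Theory.
Local Open Scope ring_scope.
Lemma rsum_big (n : nat) (f : nat -> R) : rsum n f = \sum_(i < n) f i.
Proof. elim: n => [|n IH] /=; first by rewrite big_ord0. by rewrite big_ord_recr /= IH. Qed.
Lemma orth_square (n : nat) (a : nat -> nat -> R) :
  (forall j k, (j < n)%N -> (k < n)%N -> rsum n (fun i => a i j * a i k) = if Nat.eqb j k then 1 else 0) ->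
  forall i i', (i < n)%N -> (i' < n)%N -> rsum n (fun j => a i j * a i' j) = if Nat.eqb i i' then 1 else 0.
Proof.
move=> H i i' hi hi'.
pose A := \matrix_(i < n, j < n) a i j.
have H1 : A^T *m A = 1%:M.
  apply/matrixP => j k; rewrite !mxE.
  under eq_bigr => l _ do rewrite !mxE.
  rewrite -(rsum_big n (fun i => a i j * a i k)) H //. case: (PeanoNat.Nat.eqb_spec j k) => [/val_inj ->|ne]; first by rewrite eqxx.
  by case: eqP => // E; case: ne; rewrite E.
have H2 := mulmx1C H1.
have := congr1 (fun M : 'M[R]_n => M (Ordinal hi) (Ordinal hi')) H2; rewrite /= !mxE.
under eq_bigr => l _ do rewrite !mxE.
rewrite -(rsum_big n (fun j => a i j * a i' j)) => ->.
have -> : (Ordinal hi == Ordinal hi') = (i == i') by [].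
by case: (PeanoNat.Nat.eqb_spec i i') => [->|/eqP/negbTE ->]; rewrite ?eqxx.
Qed.
Lemma orth_square' (n : nat) (a : nat -> nat -> R) :
  (forall j k, (j < n)%coq_nat -> (k < n)%coq_nat -> rsum n (fun i => a i j * a i k) = if Nat.eqb j k then 1 else 0) ->
  forall i i', (i < n)%coq_nat -> (i' < n)%coq_nat -> rsum n (fun j => a i j * a i' j) = if Nat.eqb i i' then 1 else 0.
Proof. move=> H i i' /ssrnat.ltP hi /ssrnat.ltP hi'. apply: orth_square => // j k /ssrnat.ltP hj /ssrnat.ltP hk; exact: H. Qed.
End MX.

From Coquelicot Require Import Coquelicot.
Open Scope R_scope.

Ltac cring := change Cadd with Cplus; change Cmul with Cmult; match goal with |- @eq _ ?a ?b => change (@eq C a b) end; ring.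
Lemma CaddE z w : Cadd z w = Cplus z w. Proof. reflexivity. Qed.
Lemma CmulE z w : Cmul z w = Cmult z w. Proof. reflexivity. Qed.
Lemma CscalE a z : Cscal a z = Cmult (RtoC a) z.
Proof. destruct z; unfold Cscal, Cmult, RtoC; simpl; f_equal; ring. Qed.
Lemma CnegiE z : Cmul_negi z = Cmult (0,-1) z.
Proof. destruct z; unfold Cmul_negi, Cmult; simpl; f_equal; ring. Qed.
Lemma CiE z : Cmul_i z = Cmult (0,1) z.
Proof. destruct z; unfold Cmul_i, Cmult; simpl; f_equal; ring. Qed.
Lemma CzeroE : Czero = RtoC 0. Proof. reflexivity. Qed.

Lemma csum_ext n f g : (forall i, (i < n)%nat -> f i = g i) -> csum n f = csum n g.
Proof. induction n; intros H; cbn [csum]; auto. rewrite IHn, H; auto. Qed.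
Lemma csum_fst n f : fst (csum n f) = rsum n (fun i => fst (f i)).
Proof. induction n; simpl; auto. rewrite IHn; auto. Qed.
Lemma csum_snd n f : snd (csum n f) = rsum n (fun i => snd (f i)).
Proof. induction n; simpl; auto. rewrite IHn; auto. Qed.
Lemma csum_mul_l n c f : Cmult c (csum n f) = csum n (fun i => Cmult c (f i)).
Proof. induction n; cbn [csum]. unfold Czero. change (0,0) with (RtoC 0). cring.
  rewrite <- IHn. cring. Qed.
Lemma csum_mul_r n c f : Cmult (csum n f) c = csum n (fun i => Cmult (f i) c).
Proof. rewrite Cmult_comm, csum_mul_l. apply csum_ext; intros; apply Cmult_comm. Qed.
Lemma csum_add n f g : csum n (fun i => Cplus (f i) (g i)) = Cplus (csum n f) (csum n g).
Proof. induction n; cbn [csum]. unfold Czero. change (0,0) with (RtoC 0). cring.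
  rewrite !CaddE, IHn; cring. Qed.
Lemma csum_zero n : csum n (fun _ => RtoC 0) = RtoC 0.
Proof. induction n; cbn [csum]; auto. rewrite IHn; cring. Qed.
Lemma csum_swap n m f : csum n (fun i => csum m (fun j => f i j)) = csum m (fun j => csum n (fun i => f i j)).
Proof. induction n; cbn [csum]. rewrite csum_zero; auto.
  rewrite IHn, CaddE, <- csum_add. apply csum_ext; intros; reflexivity. Qed.
Lemma csum_delta n (x : nat -> C) i : (i < n)%nat ->
  csum n (fun j => if Nat.eqb j i then x j else RtoC 0) = x i.
Proof. induction n; intros H. lia. cbn [csum]. destruct (Nat.eqb_spec n i).
  subst. rewrite csum_ext with (g := fun _ => RtoC 0). rewrite csum_zero, CaddE. cring.
  intros j Hj. destruct (Nat.eqb_spec j i); auto; lia.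
  rewrite IHn by lia. rewrite CaddE. cring. Qed.
Lemma csum_conj n f : Cconj (csum n f) = csum n (fun i => Cconj (f i)).
Proof. induction n; cbn [csum]. unfold Cconj, Czero; simpl; f_equal; ring.
  rewrite CaddE, Cplus_conj, IHn; auto. Qed.

Lemma rsum_ext n f g : (forall i, (i < n)%nat -> f i = g i) -> rsum n f = rsum n g.
Proof. induction n; intros H; simpl; auto. rewrite IHn, H; auto. Qed.
Lemma rsum_add n f g : rsum n (fun i => f i + g i) = rsum n f + rsum n g.
Proof. induction n; simpl. ring. rewrite IHn; ring. Qed.
Lemma rsum_scal n c f : rsum n (fun i => c * f i) = c * rsum n f.
Proof. induction n; simpl. ring. rewrite IHn; ring. Qed.
Lemma rsum_zero n : rsum n (fun _ => 0) = 0.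
Proof. induction n; simpl; auto. rewrite IHn; ring. Qed.
Lemma rsum_swap n m f : rsum n (fun i => rsum m (fun j => f i j)) = rsum m (fun j => rsum n (fun i => f i j)).
Proof. induction n; simpl. rewrite rsum_zero; auto.
  rewrite IHn, <- rsum_add; auto. Qed.
Lemma rsum_delta n (x : nat -> R) i : (i < n)%nat ->
  rsum n (fun j => if Nat.eqb j i then x j else 0) = x i.
Proof. induction n; intros H. lia. simpl. destruct (Nat.eqb_spec n i).
  subst. rewrite rsum_ext with (g := fun _ => 0). rewrite rsum_zero. ring.
  intros j Hj. destruct (Nat.eqb_spec j i); auto; lia.
  rewrite IHn by lia. ring. Qed.
Lemma rsum_delta' n (x : nat -> R) i : (i < n)%nat ->
  rsum n (fun j => x j * (if Nat.eqb i j then 1 else 0)) = x i.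
Proof. intros H. rewrite <- (rsum_delta n x i H). apply rsum_ext; intros j _.
  destruct (Nat.eqb_spec i j), (Nat.eqb_spec j i); subst; try lia; ring. Qed.
Lemma rsum_split a b f : rsum (a + b) f = rsum a f + rsum b (fun i => f (a + i)%nat).
Proof. induction b; simpl. rewrite Nat.add_0_r; ring. rewrite Nat.add_succ_r; simpl. rewrite IHb; ring. Qed.

Lemma Nn_pos J : (0 < Nn J)%nat.
Proof. unfold Nn. apply Nat.neq_0_lt_0, Nat.pow_nonzero; lia. Qed.
Lemma Nn_half J : (1 <= J)%nat -> Nn J = (2 * Nhalf J)%nat.
Proof. intros H. unfold Nhalf, Nn. destruct J. lia. rewrite Nat.pow_succ_r'.
  rewrite Nat.mul_comm, Nat.div_mul; lia. Qed.
Lemma NR_pos J : 0 < NR J.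
Proof. unfold NR. apply lt_0_INR, Nn_pos. Qed.
Lemma NR_NZ J : NR J = IZR (NZ J).
Proof. unfold NR, NZ. apply INR_IZR_INZ. Qed.

Lemma sin_2PIm m : sin (2 * PI * IZR m) = 0.
Proof. apply sin_eq_0_1. exists (2 * m)%Z. rewrite mult_IZR. ring. Qed.
Lemma cos_2PIm m : cos (2 * PI * IZR m) = 1.
Proof. replace (2 * PI * IZR m) with (2 * (PI * IZR m)) by ring. rewrite cos_2a_sin.
  rewrite (sin_eq_0_1 (PI * IZR m)). ring. exists m; ring. Qed.
Lemma cis_add a b : Cmult (cis a) (cis b) = cis (a + b).
Proof. unfold cis, Cmult; simpl. rewrite cos_plus, sin_plus. f_equal; ring. Qed.
Lemma cis_period x m : cis (x + 2 * PI * IZR m) = cis x.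
Proof. unfold cis. rewrite cos_plus, sin_plus, sin_2PIm, cos_2PIm. f_equal; ring. Qed.

Lemma omega_add J a b : Cmult (omega_pow J a) (omega_pow J b) = omega_pow J (a + b).
Proof. unfold omega_pow. rewrite cis_add, plus_IZR. f_equal. field. apply Rgt_not_eq, NR_pos. Qed.
Lemma omega_0 J : omega_pow J 0 = RtoC 1.
Proof. unfold omega_pow, cis, RtoC. replace (2 * PI * IZR 0 / NR J) with 0.
  rewrite cos_0, sin_0; auto. simpl; field. apply Rgt_not_eq, NR_pos. Qed.
Lemma omega_conj J a : Cconj (omega_pow J a) = omega_pow J (- a).
Proof. unfold omega_pow, cis, Cconj; simpl. rewrite opp_IZR.
  replace (2 * PI * - IZR a / NR J) with (- (2 * PI * IZR a / NR J)).
  rewrite cos_neg, sin_neg; auto. field. apply Rgt_not_eq, NR_pos. Qed.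
Lemma omega_period J a m : omega_pow J (a + NZ J * m) = omega_pow J a.
Proof. unfold omega_pow. rewrite <- (cis_period (2 * PI * IZR a / NR J) m). f_equal. rewrite plus_IZR, mult_IZR, <- NR_NZ.
  field. apply Rgt_not_eq, NR_pos. Qed.
Lemma omega_N J m : omega_pow J (NZ J * m) = RtoC 1.
Proof. rewrite <- (omega_0 J). rewrite <- (omega_period J 0 m). f_equal. Qed.

Lemma omega_geom J d n : Cmult (Cminus (omega_pow J d) (RtoC 1)) (csum n (fun k => omega_pow J (Z.of_nat k * d)))
  = Cminus (omega_pow J (Z.of_nat n * d)) (RtoC 1).
Proof. induction n; cbn [csum].
  - rewrite omega_0. unfold Czero. change (0,0) with (RtoC 0). cring.
  - change Cadd with Cplus. rewrite Cmult_plus_distr_l, IHn.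
    replace (omega_pow J (Z.of_nat (S n) * d)) with (Cmult (omega_pow J d) (omega_pow J (Z.of_nat n * d))).
    cring. rewrite omega_add. f_equal. lia. Qed.

Lemma omega_ne1 J d : (0 < Z.abs d < NZ J)%Z -> omega_pow J d <> RtoC 1.
Proof. intros Hd E. unfold omega_pow, cis, RtoC in E. injection E; intros Es Ec.
  destruct (sin_eq_0_0 _ Es) as [k Hk].
  assert (HN := NR_pos J). rewrite NR_NZ in HN, Hk, Ec.
  assert (E2 : IZR (2 * d) = IZR (k * NZ J)).
  { rewrite !mult_IZR. apply Rmult_eq_reg_r with (PI / IZR (NZ J)).
    replace (IZR 2 * IZR d * (PI / IZR (NZ J))) with (2 * PI * IZR d / IZR (NZ J)) by (field; lra).
    rewrite Hk. field. lra. apply Rgt_not_eq. apply Rdiv_lt_0_compat; [apply PI_RGT_0|lra]. }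
  apply eq_IZR in E2.
  assert (k = 1 \/ k = -1)%Z as [-> | ->] by nia.
  - rewrite Hk in Ec. rewrite Rmult_1_l, cos_PI in Ec. lra.
  - rewrite Hk in Ec. replace (IZR (-1) * PI) with (- PI) in Ec by (simpl; ring). rewrite cos_neg, cos_PI in Ec. lra.
Qed.

Lemma char_sum J n n' : (n < Nn J)%nat -> (n' < Nn J)%nat ->
  csum (Nn J) (fun k => omega_pow J (Z.of_nat k * (Z.of_nat n - Z.of_nat n'))) =
  if Nat.eqb n n' then RtoC (NR J) else RtoC 0.
Proof. intros Hn Hn'. destruct (Nat.eqb_spec n n').
  - subst. rewrite csum_ext with (g := fun _ => RtoC 1).
    + unfold NR. clear. induction (Nn J). reflexivity. cbn [csum]. rewrite IHn, S_INR. unfold RtoC, Cadd; simpl. f_equal; ring.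
    + intros i _. rewrite <- (omega_0 J). f_equal. lia.
  - set (d := (Z.of_nat n - Z.of_nat n')%Z).
    assert (Hd : (0 < Z.abs d < NZ J)%Z) by (unfold d, NZ; lia).
    assert (H := omega_geom J d (Nn J)).
    replace (Z.of_nat (Nn J) * d)%Z with (NZ J * d)%Z in H by reflexivity.
    rewrite omega_N in H.
    assert (Hne : Cminus (omega_pow J d) (RtoC 1) <> RtoC 0).
    { intros E. apply (omega_ne1 J d Hd).
      replace (omega_pow J d) with (Cplus (Cminus (omega_pow J d) (RtoC 1)) (RtoC 1)) by cring.
      rewrite E. cring. }
    apply (f_equal (fun z => Cmult (Cinv (Cminus (omega_pow J d) (RtoC 1))) z)) in H.
    simpl in H. rewrite Cmult_assoc, Cinv_l in H by exact Hne.
    rewrite Cmult_1_l in H. rewrite H. cring.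
Qed.

Lemma csum_shift m h : csum (S m) h = Cadd (h 0%nat) (csum m (fun i => h (S i))).
Proof. induction m. cbn [csum]. cring.
  change (csum (S (S m)) h) with (Cadd (csum (S m) h) (h (S m))). rewrite IHm.
  change (csum (S m) (fun i => h (S i))) with (Cadd (csum m (fun i => h (S i))) (h (S m))). cring. Qed.
Lemma csum_rev m u : csum m (fun i => u (m - 1 - i)%nat) = csum m u.
Proof. induction m. reflexivity. rewrite csum_shift.
  replace (S m - 1 - 0)%nat with m by lia.
  rewrite (csum_ext m _ (fun i => u (m - 1 - i)%nat)) by (intros; f_equal; lia).
  rewrite IHm. cbn [csum]. cring. Qed.
Lemma csum_refl N g : (0 < N)%nat -> csum N (fun n => g ((N - n) mod N)%nat) = csum N g.
Proof. intros HN. destruct N as [|M]. lia. rewrite !csum_shift.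
  rewrite Nat.sub_0_r, Nat.Div0.mod_same by lia. f_equal.
  rewrite (csum_ext M _ (fun i => (fun j => g (S j)) (M - 1 - i)%nat)).
  apply (csum_rev M (fun j => g (S j))).
  intros i Hi. f_equal. rewrite Nat.mod_small; lia. Qed.

Lemma idft_real J f : (forall n, (n < Nn J)%nat -> f (Z.of_nat ((Nn J - n) mod Nn J)) = Cconj (f (Z.of_nat n))) ->
  forall k, snd (idft J f k) = 0.
Proof. intros Hf k. unfold idft.
  set (S0 := csum (Nn J) _).
  assert (HS : Cconj S0 = S0).
  { unfold S0. rewrite csum_conj.
    rewrite <- (csum_refl (Nn J) (fun n => Cmul (f (Z.of_nat n)) (omega_pow J (k * Z.of_nat n)))) by apply Nn_pos.
    apply csum_ext. intros n Hn. rewrite CmulE, Cmult_conj, omega_conj. rewrite Hf by exact Hn.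
    change Cmul with Cmult. f_equal. destruct n as [|n].
    - rewrite Nat.sub_0_r, Nat.Div0.mod_same by (pose proof (Nn_pos J); lia). f_equal. ring.
    - rewrite Nat.mod_small by lia. rewrite Nat2Z.inj_sub by lia.
      replace (k * (Z.of_nat (Nn J) - Z.of_nat (S n)))%Z with (- (k * Z.of_nat (S n)) + NZ J * k)%Z
        by (unfold NZ; ring).
      rewrite omega_period; auto. }
  destruct S0 as [x y]. unfold Cconj in HS; simpl in HS. injection HS; intros. assert (y = 0) by lra. subst y. simpl. ring.
Qed.

Lemma Cconj_RtoC x : Cconj (RtoC x) = RtoC x.
Proof. unfold Cconj, RtoC; simpl; f_equal; ring. Qed.
Lemma omega_split J e1 e2 e3 e4 : (e1 + e2 = e3 + e4)%Z ->
  Cmult (omega_pow J e1) (omega_pow J e2) = Cmult (omega_pow J e3) (omega_pow J e4).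
Proof. intros H. rewrite !omega_add, H; auto. Qed.

Lemma parseval J f g a b : (forall k, snd (idft J f k) = 0) -> (forall k, snd (idft J g k) = 0) ->
 rsum (Nn J) (fun k => fst (idft J f (Z.of_nat k - a)) * fst (idft J g (Z.of_nat k - b))) =
 fst (Cmult (RtoC (/ NR J)) (csum (Nn J) (fun n => Cmult (Cmult (f (Z.of_nat n)) (Cconj (g (Z.of_nat n))))
       (omega_pow J ((b - a) * Z.of_nat n))))).
Proof.
  intros Hf Hg.
  set (c := RtoC (/ NR J)).
  set (X := fun n n' : nat => Cmult (Cmult (f (Z.of_nat n)) (Cconj (g (Z.of_nat n'))))
                 (omega_pow J (- a * Z.of_nat n + b * Z.of_nat n'))).
  transitivity (fst (csum (Nn J) (fun k => Cmult (idft J f (Z.of_nat k - a)) (Cconj (idft J g (Z.of_nat k - b)))))).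
  { rewrite csum_fst. apply rsum_ext. intros k _. specialize (Hf (Z.of_nat k - a)%Z). specialize (Hg (Z.of_nat k - b)%Z).
    destruct (idft J f _), (idft J g _). simpl in *. subst. ring. }
  f_equal.
  rewrite (csum_ext (Nn J) _ (fun k => Cmult (Cmult c c) (csum (Nn J) (fun n => csum (Nn J) (fun n' =>
       Cmult (X n n') (omega_pow J (Z.of_nat k * (Z.of_nat n - Z.of_nat n')))))))).
  2:{ intros k _. unfold idft. rewrite !CscalE. rewrite Cmult_conj, csum_conj.
      rewrite Cconj_RtoC.
      fold c.
      transitivity (Cmult (Cmult c c) (Cmult (csum (Nn J) (fun n => Cmul (f (Z.of_nat n)) (omega_pow J ((Z.of_nat k - a) * Z.of_nat n))))
        (csum (Nn J) (fun i => Cconj (Cmul (g (Z.of_nat i)) (omega_pow J ((Z.of_nat k - b) * Z.of_nat i))))))).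
      { cring. }
      f_equal. rewrite csum_mul_r. apply csum_ext; intros n _. rewrite csum_mul_l. apply csum_ext; intros n' _.
      unfold X. change Cmul with Cmult. rewrite Cmult_conj, omega_conj.
      transitivity (Cmult (Cmult (f (Z.of_nat n)) (Cconj (g (Z.of_nat n'))))
         (Cmult (omega_pow J ((Z.of_nat k - a) * Z.of_nat n)) (omega_pow J (- ((Z.of_nat k - b) * Z.of_nat n'))))).
      { cring. }
      rewrite (omega_split J _ _ (- a * Z.of_nat n + b * Z.of_nat n') (Z.of_nat k * (Z.of_nat n - Z.of_nat n'))) by ring.
      cring. }
  rewrite <- csum_mul_l. rewrite csum_swap.
  rewrite (csum_ext (Nn J) _ (fun n => Cmult (X n n) (RtoC (NR J)))).
  2:{ intros n Hn. rewrite csum_swap.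
      rewrite (csum_ext (Nn J) _ (fun n' => Cmult (X n n') (if Nat.eqb n n' then RtoC (NR J) else RtoC 0))).
      - rewrite (csum_ext (Nn J) _ (fun n' => if Nat.eqb n' n then Cmult (X n n') (RtoC (NR J)) else RtoC 0)).
        + apply csum_delta; auto.
        + intros n' _. destruct (Nat.eqb_spec n n'), (Nat.eqb_spec n' n); subst; try lia; auto. cring.
      - intros n' Hn'. rewrite <- csum_mul_l. f_equal. apply char_sum; auto. }
  rewrite <- (csum_mul_r (Nn J) (RtoC (NR J)) (fun n => X n n)).
  rewrite (csum_ext (Nn J) (fun n => X n n)
     (fun n => Cmult (Cmult (f (Z.of_nat n)) (Cconj (g (Z.of_nat n)))) (omega_pow J ((b - a) * Z.of_nat n)))).
  2:{ intros; unfold X; f_equal; f_equal; ring. }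
  set (SS := csum (Nn J) _).
  assert (HN := NR_pos J).
  assert (H1 : Cmult (RtoC (/ NR J)) (RtoC (NR J)) = RtoC 1).
  { unfold Cmult, RtoC; simpl. f_equal; field; lra. }
  unfold c. transitivity (Cmult (Cmult (RtoC (/ NR J)) SS) (Cmult (RtoC (/ NR J)) (RtoC (NR J)))). cring.
  rewrite H1. cring.
Qed.

Lemma theta_refl J z : PI * IZR (NZ J - z) / NR J = PI - PI * IZR z / NR J.
Proof. rewrite minus_IZR, <- NR_NZ. field. apply Rgt_not_eq, NR_pos. Qed.
Lemma pow_even_neg x r : (- x) ^ (2 * r) = x ^ (2 * r).
Proof. rewrite !pow_sqr. f_equal. ring. Qed.
Lemma pow_4_neg x r : (- x) ^ (4 * r) = x ^ (4 * r).
Proof. replace (4 * r)%nat with (2 * (2 * r))%nat by lia. apply pow_even_neg. Qed.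

Lemma Ufun_refl J r z : Ufun J r (NZ J - z) = Ufun J r z.
Proof. unfold Ufun. rewrite theta_refl, sin_PI_x, Rtrigo_facts.cos_pi_minus, pow_4_neg. auto. Qed.
Lemma beta_refl J r z : beta J r (NZ J - z) = beta J r z.
Proof. unfold beta. rewrite Ufun_refl, theta_refl, Rtrigo_facts.cos_pi_minus, pow_even_neg. auto. Qed.
Lemma alpha_refl J r z : alpha J r (NZ J - z) = Cconj (alpha J r z).
Proof. unfold alpha. rewrite Ufun_refl, theta_refl, sin_PI_x.
  replace (NZ J - z)%Z with (- z + NZ J * 1)%Z by ring. rewrite omega_period, <- omega_conj.
  destruct (omega_pow J z). unfold Cscal, Cconj; simpl. f_equal. ring. Qed.
Lemma psihat_refl J r mu z : psihat J r mu (NZ J - z) = Cconj (psihat J r mu z).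
Proof. unfold psihat. destruct (Nat.eqb mu 0). rewrite beta_refl. unfold Cconj; simpl. f_equal; ring.
  apply alpha_refl. Qed.
Lemma psihat0_real J r mu : Cconj (psihat J r mu 0) = psihat J r mu 0.
Proof. unfold psihat. destruct (Nat.eqb mu 0). unfold Cconj; simpl. f_equal; ring.
  unfold alpha. rewrite omega_0. unfold Cscal, Cconj, RtoC; simpl. f_equal. ring. Qed.

Lemma Nhalf_pos J : (1 <= J)%nat -> (0 < Nhalf J)%nat.
Proof. intros H. pose proof (Nn_pos J). pose proof (Nn_half J H). lia. Qed.

Lemma ltb_nat_Z a b : Nat.ltb a b = (Z.of_nat a <? Z.of_nat b)%Z.
Proof. destruct (Nat.ltb_spec a b), (Z.ltb_spec (Z.of_nat a) (Z.of_nat b)); auto; lia. Qed.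
Lemma phihat_nat J r mu n : (n < Nn J)%nat ->
  phihat J r mu (Z.of_nat n) =
  if andb (Nat.ltb 0 n) (Nat.ltb n (Nhalf J)) then Cmul_negi (psihat J r mu (Z.of_nat n))
  else if Nat.ltb (Nhalf J) n then Cmul_i (psihat J r mu (Z.of_nat n))
  else psihat J r mu (Z.of_nat n).
Proof. intros Hn. unfold phihat. rewrite Z.mod_small by (unfold NZ; lia).
  replace (0 <? Z.of_nat n)%Z with (Nat.ltb 0 n).
  replace (Z.of_nat n <? Z.of_nat (Nhalf J))%Z with (Nat.ltb n (Nhalf J)).
  replace (Z.of_nat (Nhalf J) <? Z.of_nat n)%Z with (Nat.ltb (Nhalf J) n). auto.
  all: rewrite ltb_nat_Z; reflexivity. Qed.

Lemma phihat_herm J r mu : (1 <= J)%nat -> forall n, (n < Nn J)%nat ->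
  phihat J r mu (Z.of_nat ((Nn J - n) mod Nn J)) = Cconj (phihat J r mu (Z.of_nat n)).
Proof. intros HJ n Hn. pose proof (Nn_half J HJ) as HN. pose proof (Nhalf_pos J HJ).
  destruct n as [|n].
  - rewrite Nat.sub_0_r, Nat.Div0.mod_same. rewrite phihat_nat by lia. simpl.
    destruct (Nat.ltb_spec (Nhalf J) 0). lia. symmetry; apply psihat0_real.
  - rewrite Nat.mod_small by lia.
    rewrite !phihat_nat by lia.
    assert (Hz : Z.of_nat (Nn J - S n) = (NZ J - Z.of_nat (S n))%Z) by (unfold NZ; lia).
    rewrite Hz, psihat_refl. destruct (psihat J r mu (Z.of_nat (S n))) as [p q].
    destruct (Nat.ltb_spec 0 (Nn J - S n)), (Nat.ltb_spec (Nn J - S n) (Nhalf J)),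
      (Nat.ltb_spec (Nhalf J) (Nn J - S n)), (Nat.ltb_spec 0 (S n)), (Nat.ltb_spec (S n) (Nhalf J)),
      (Nat.ltb_spec (Nhalf J) (S n)); simpl; try lia;
    unfold Cmul_negi, Cmul_i, Cconj; simpl; try (f_equal; ring).
Qed.

Lemma psihat_herm J r mu : forall n, (n < Nn J)%nat ->
  psihat J r mu (Z.of_nat ((Nn J - n) mod Nn J)) = Cconj (psihat J r mu (Z.of_nat n)).
Proof. intros n Hn. destruct n as [|n].
  - rewrite Nat.sub_0_r, Nat.Div0.mod_same. symmetry; apply psihat0_real.
  - rewrite Nat.mod_small by lia.
    assert (Hz : Z.of_nat (Nn J - S n) = (NZ J - Z.of_nat (S n))%Z) by (unfold NZ; lia).
    rewrite Hz. apply psihat_refl. Qed.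

Lemma psi_real J r mu k : snd (idft J (psihat J r mu) k) = 0.
Proof. apply idft_real. apply psihat_herm. Qed.
Lemma phi_real J r mu k : (1 <= J)%nat -> snd (idft J (phihat J r mu) k) = 0.
Proof. intros HJ. apply idft_real. apply phihat_herm; auto. Qed.

Lemma phihat_prod J r mu nu n : (n < Nn J)%nat ->
  Cmult (phihat J r mu (Z.of_nat n)) (Cconj (phihat J r nu (Z.of_nat n))) =
  Cmult (psihat J r mu (Z.of_nat n)) (Cconj (psihat J r nu (Z.of_nat n))).
Proof. intros Hn. rewrite !phihat_nat by auto.
  destruct (psihat J r mu (Z.of_nat n)) as [a b], (psihat J r nu (Z.of_nat n)) as [c d].
  destruct (andb _ _); [|destruct (Nat.ltb _ _)]; unfold Cmul_negi, Cmul_i, Cconj, Cmult; simpl; f_equal; ring.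
Qed.

Lemma gram_eq J r mu mu' l l' : (1 <= J)%nat ->
  ip J (shift2 (phi J r mu) l) (shift2 (phi J r mu') l') = ip J (shift2 (psi J r mu) l) (shift2 (psi J r mu') l').
Proof. intros HJ. unfold ip, shift2, phi, psi.
  rewrite !parseval; try (intros; apply phi_real; auto); try (intros; apply psi_real).
  f_equal. f_equal. apply csum_ext. intros n Hn. rewrite phihat_prod; auto. Qed.

Lemma idft_period J f k : idft J f (k + NZ J) = idft J f k.
Proof. unfold idft. f_equal. apply csum_ext. intros n _. f_equal.
  replace ((k + NZ J) * Z.of_nat n)%Z with (k * Z.of_nat n + NZ J * Z.of_nat n)%Z by ring.
  apply omega_period. Qed.
Lemma phi_shift_periodic J r mu l : periodic J (shift2 (phi J r mu) l).
Proof. intros k. unfold shift2, phi. replace (k + NZ J - 2 * Z.of_nat l)%Z with ((k - 2 * Z.of_nat l) + NZ J)%Z by ring.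
  rewrite idft_period. auto. Qed.

Lemma theta0 J : PI * IZR 0 / NR J = 0.
Proof. simpl. field. apply Rgt_not_eq, NR_pos. Qed.
Lemma thetah J : (1 <= J)%nat -> PI * IZR (Z.of_nat (Nhalf J)) / NR J = PI / 2.
Proof. intros HJ. unfold NR. rewrite (Nn_half J HJ), <- INR_IZR_INZ, mult_INR. simpl. field.
  pose proof (Nhalf_pos J HJ). apply Rgt_not_eq, lt_0_INR; lia. Qed.
Lemma inv_sqrt_half : / sqrt (/ 2) = sqrt 2.
Proof. rewrite sqrt_inv, Rinv_inv. auto. Qed.
Lemma U0 J r : (1 <= r)%nat -> Ufun J r 0 = / 2.
Proof. intros Hr. unfold Ufun. rewrite theta0, cos_0, sin_0, pow1, pow_i by lia. ring. Qed.
Lemma Uh J r : (1 <= J)%nat -> (1 <= r)%nat -> Ufun J r (Z.of_nat (Nhalf J)) = / 2.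
Proof. intros HJ Hr. unfold Ufun. rewrite thetah by auto. rewrite cos_PI2, sin_PI2, pow1, pow_i by lia. ring. Qed.

Lemma val00 J r : (1 <= J)%nat -> (1 <= r)%nat -> phihat J r 0 0%Z = (sqrt 2, 0).
Proof. intros HJ Hr. change 0%Z with (Z.of_nat 0). rewrite (phihat_nat J r 0 0) by apply Nn_pos. simpl.
  destruct (Nat.ltb_spec (Nhalf J) 0); [lia|]. unfold psihat; simpl. unfold beta.
  rewrite U0, theta0, cos_0, pow1 by auto. unfold Rdiv. rewrite inv_sqrt_half. f_equal; ring. Qed.

Lemma Nhalf_lt J : (1 <= J)%nat -> (Nhalf J < Nn J)%nat.
Proof. intros HJ. pose proof (Nhalf_pos J HJ). pose proof (Nn_half J HJ). lia. Qed.

Lemma val0h J r : (1 <= J)%nat -> (1 <= r)%nat -> phihat J r 0 (Z.of_nat (Nhalf J)) = (0, 0).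
Proof. intros HJ Hr. rewrite phihat_nat by (apply Nhalf_lt; auto).
  rewrite Nat.ltb_irrefl, Bool.andb_false_r. unfold psihat; simpl. unfold beta.
  rewrite thetah, cos_PI2, pow_i by lia. f_equal. unfold Rdiv; ring. Qed.
Lemma val10 J r : (1 <= J)%nat -> (1 <= r)%nat -> phihat J r 1 0%Z = (0, 0).
Proof. intros HJ Hr. change 0%Z with (Z.of_nat 0). rewrite (phihat_nat J r 1 0) by apply Nn_pos. simpl.
  destruct (Nat.ltb_spec (Nhalf J) 0); [lia|]. unfold psihat; simpl. unfold alpha.
  rewrite theta0, sin_0, pow_i by lia. unfold Cscal. f_equal; unfold Rdiv; ring. Qed.
Lemma val1h J r : (1 <= J)%nat -> (1 <= r)%nat -> phihat J r 1 (Z.of_nat (Nhalf J)) = (- sqrt 2, 0).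
Proof. intros HJ Hr. rewrite phihat_nat by (apply Nhalf_lt; auto).
  rewrite Nat.ltb_irrefl, Bool.andb_false_r. unfold psihat; simpl. unfold alpha.
  rewrite thetah, sin_PI2, pow1, Uh by auto. unfold Rdiv. rewrite Rmult_1_l, inv_sqrt_half.
  unfold omega_pow. replace (2 * PI * IZR (Z.of_nat (Nhalf J)) / NR J) with (2 * (PI * IZR (Z.of_nat (Nhalf J)) / NR J)) by (unfold Rdiv; ring).
  rewrite thetah by auto. replace (2 * (PI / 2)) with PI by field. unfold cis, Cscal; simpl. rewrite cos_PI, sin_PI.
  f_equal; ring. Qed.



Lemma orth_sq (n : nat) (a : nat -> nat -> R) :
  (forall j k, (j < n)%nat -> (k < n)%nat -> rsum n (fun i => a i j * a i k) = if Nat.eqb j k then 1 else 0) ->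
  forall i i', (i < n)%nat -> (i' < n)%nat -> rsum n (fun j => a i j * a i' j) = if Nat.eqb i i' then 1 else 0.
Proof. exact (MX.orth_square' n a). Qed.

Lemma ip_ext J x x' y y' : (forall k, x k = x' k) -> (forall k, y k = y' k) -> ip J x y = ip J x' y'.
Proof. intros H1 H2. unfold ip. apply rsum_ext. intros. rewrite H1, H2; auto. Qed.
Lemma ip_lin_r J x n c y : ip J x (fun k => rsum n (fun i => c i * y i k)) = rsum n (fun i => c i * ip J x (y i)).
Proof. unfold ip. rewrite (rsum_ext _ _ (fun k => rsum n (fun i => c i * (x (Z.of_nat k) * y i (Z.of_nat k))))).
  rewrite rsum_swap. apply rsum_ext; intros. rewrite rsum_scal; auto.
  intros k _. rewrite <- rsum_scal. apply rsum_ext; intros; ring. Qed.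
Lemma ip_comm J x y : ip J x y = ip J y x.
Proof. unfold ip. apply rsum_ext; intros; ring. Qed.
Lemma ip_lin_l J y n c x : ip J (fun k => rsum n (fun i => c i * x i k)) y = rsum n (fun i => c i * ip J (x i) y).
Proof. rewrite ip_comm, ip_lin_r. apply rsum_ext; intros; rewrite ip_comm; auto. Qed.

Lemma idx_lo h i : (i < h)%nat -> (i / h = 0 /\ i mod h = i)%nat.
Proof. intros H. split; [apply Nat.div_small | apply Nat.mod_small]; auto. Qed.
Lemma idx_hi h i : (i < h)%nat -> ((h + i) / h = 1 /\ (h + i) mod h = i)%nat.
Proof. intros H. replace (h + i)%nat with (i + 1 * h)%nat by lia. split.
  rewrite Nat.div_add by lia. rewrite Nat.div_small; lia.
  rewrite Nat.Div0.mod_add. apply Nat.mod_small; auto. Qed.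
Lemma idx_bd h i : (i < h + h)%nat -> (i / h <= 1 /\ i mod h < h)%nat.
Proof. intros H. assert (0 < h)%nat by lia. split.
  apply Nat.lt_succ_r. apply Nat.Div0.div_lt_upper_bound. lia. apply Nat.mod_upper_bound; lia. Qed.
Lemma idx_eq h i j : (i < h + h)%nat -> (j < h + h)%nat ->
  andb (Nat.eqb (i / h) (j / h)) (Nat.eqb (i mod h) (j mod h)) = Nat.eqb i j.
Proof. intros Hi Hj. assert (0 < h)%nat by lia.
  pose proof (Nat.div_mod i h ltac:(lia)) as Ei. pose proof (Nat.div_mod j h ltac:(lia)) as Ej.
  destruct (Nat.eqb_spec (i / h) (j / h)) as [E1|E1], (Nat.eqb_spec (i mod h) (j mod h)) as [E2|E2], (Nat.eqb_spec i j) as [E3|E3]; simpl; auto;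
  try (subst; congruence).
  Qed.

Lemma transfer J (P Q : nat -> Z -> R) :
  (0 < Nhalf J)%nat -> is_ONB2 J P ->
  (forall mu l, (mu <= 1)%nat -> periodic J (shift2 (Q mu) l)) ->
  (forall mu mu' l l', (mu <= 1)%nat -> (mu' <= 1)%nat -> (l < Nhalf J)%nat -> (l' < Nhalf J)%nat ->
     ip J (shift2 (Q mu) l) (shift2 (Q mu') l') = (if andb (Nat.eqb mu mu') (Nat.eqb l l') then 1 else 0)) ->
  is_ONB2 J Q.
Proof.
  intros Hh [HPper [HPort HPspan]] HQper HQort.
  split; [exact HQper|split; [exact HQort|]].
  set (h := Nhalf J) in *. set (M := (h + h)%nat).
  set (Bi := fun i => shift2 (P (i / h)%nat) (i mod h)).
  set (Ci := fun i => shift2 (Q (i / h)%nat) (i mod h)).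
  assert (HB : forall i j, (i < M)%nat -> (j < M)%nat -> ip J (Bi i) (Bi j) = if Nat.eqb i j then 1 else 0).
  { intros i j Hi Hj. destruct (idx_bd h i Hi), (idx_bd h j Hj). unfold Bi. rewrite HPort by auto.
    rewrite idx_eq; auto. }
  assert (HC : forall i j, (i < M)%nat -> (j < M)%nat -> ip J (Ci i) (Ci j) = if Nat.eqb i j then 1 else 0).
  { intros i j Hi Hj. destruct (idx_bd h i Hi), (idx_bd h j Hj). unfold Ci. rewrite HQort by auto.
    rewrite idx_eq; auto. }
  assert (Hspan : forall x, periodic J x -> exists c : nat -> R, forall k, x k = rsum M (fun i => c i * Bi i k)).
  { intros x Hx. destruct (HPspan x Hx) as [c0 [c1 Hc]].
    exists (fun i => if Nat.ltb i h then c0 i else c1 (i - h)%nat). intros k. rewrite Hc. unfold M. rewrite rsum_split.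
    f_equal; apply rsum_ext; intros i Hi.
    - destruct (idx_lo h i Hi) as [E1 E2]. unfold Bi. rewrite E1, E2. destruct (Nat.ltb_spec i h); [auto|lia].
    - destruct (idx_hi h i Hi) as [E1 E2]. unfold Bi. rewrite E1, E2. destruct (Nat.ltb_spec (h + i) h); [lia|].
      replace (h + i - h)%nat with i by lia. auto. }
  set (A := fun i j => ip J (Bi i) (Ci j)).
  assert (HCexp : forall j, (j < M)%nat -> forall k, Ci j k = rsum M (fun i => A i j * Bi i k)).
  { intros j Hj. destruct (idx_bd h j Hj).
    destruct (Hspan (Ci j)) as [a Ha]. unfold Ci; apply HQper; auto.
    intros k. rewrite Ha. apply rsum_ext. intros i Hi. f_equal.
    unfold A. rewrite (ip_ext J (Bi i) (Bi i) (Ci j) _ (fun _ => eq_refl) Ha).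
    rewrite ip_lin_r. rewrite (rsum_ext _ _ (fun i' => a i' * (if Nat.eqb i i' then 1 else 0))).
    symmetry; apply rsum_delta'; auto.
    intros i' Hi'. rewrite HB by auto. destruct (Nat.eqb_spec i i'), (Nat.eqb_spec i' i); subst; auto; lia. }
  assert (Hcol : forall j j', (j < M)%nat -> (j' < M)%nat -> rsum M (fun i => A i j * A i j') = if Nat.eqb j j' then 1 else 0).
  { intros j j' Hj Hj'. rewrite <- HC by auto.
    rewrite (ip_ext J (Ci j) _ (Ci j') (Ci j') (HCexp j Hj) (fun _ => eq_refl)).
    rewrite ip_lin_l. auto. }
  assert (Hrow := orth_sq M A Hcol).
  assert (HBexp : forall i, (i < M)%nat -> forall k, Bi i k = rsum M (fun j => A i j * Ci j k)).
  { intros i Hi k.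
    rewrite (rsum_ext _ _ (fun j => rsum M (fun i' => A i j * A i' j * Bi i' k))).
    2:{ intros j Hj. rewrite HCexp by auto. rewrite <- rsum_scal. apply rsum_ext; intros; ring. }
    rewrite rsum_swap.
    rewrite (rsum_ext _ _ (fun i' => Bi i' k * (if Nat.eqb i i' then 1 else 0))).
    symmetry; apply rsum_delta'; auto.
    intros i' Hi'. rewrite <- Hrow by auto. rewrite <- rsum_scal.
    apply rsum_ext; intros; ring. }
  intros x Hx. destruct (Hspan x Hx) as [c Hc].
  set (d := fun j => rsum M (fun i => c i * A i j)).
  exists d, (fun l => d (h + l)%nat). intros k.
  assert (Hx2 : x k = rsum M (fun j => d j * Ci j k)).
  { rewrite Hc. unfold d.
    rewrite (rsum_ext _ _ (fun i => rsum M (fun j => c i * A i j * Ci j k))).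
    2:{ intros i Hi. rewrite HBexp by auto. rewrite <- rsum_scal. apply rsum_ext; intros; ring. }
    rewrite rsum_swap. apply rsum_ext; intros j Hj. rewrite Rmult_comm, <- rsum_scal. apply rsum_ext; intros; ring. }
  rewrite Hx2. unfold M. rewrite rsum_split. f_equal; apply rsum_ext; intros i Hi.
  - destruct (idx_lo h i Hi) as [E1 E2]. unfold Ci. rewrite E1, E2. auto.
  - destruct (idx_hi h i Hi) as [E1 E2]. unfold Ci. rewrite E1, E2. auto.
Qed.

Theorem proposition4p1 (J r : nat) (HJ : (1 <= J)%nat) (Hr : (1 <= r)%nat)
  (Hpsi : is_ONB2 J (psi J r)) :
  (forall mu k, (mu <= 1)%nat -> snd (idft J (phihat J r mu) k) = 0) /\
  phihat J r 0 0%Z = (sqrt 2, 0) /\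
  phihat J r 0 (Z.of_nat (Nhalf J)) = (0, 0) /\
  phihat J r 1 0%Z = (0, 0) /\
  phihat J r 1 (Z.of_nat (Nhalf J)) = (- sqrt 2, 0) /\
  is_ONB2 J (phi J r) /\
  (forall x : Z -> R, periodic J x ->
     (in_C J r 1 x <-> (forall y, in_C J r 0 y -> ip J x y = 0))) /\
  (forall (mu : nat) (x : Z -> R), (mu <= 1)%nat -> periodic J x ->
     in_C J r mu (proj J r mu x) /\
     (forall y, in_C J r mu y -> ip J (fun k => x k - proj J r mu x k) y = 0)).
Proof.
  assert (Hh := Nhalf_pos J HJ).
  assert (Hphi : is_ONB2 J (phi J r)).
  { apply (transfer J (psi J r)); auto.
    - intros; apply phi_shift_periodic.
    - intros. rewrite gram_eq by auto. destruct Hpsi as [_ [Hpo _]]. apply Hpo; auto. }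
  pose proof Hphi as [Hper [Hort Hspan]].
  split; [intros; apply phi_real; auto|].
  split; [apply val00; auto|].
  split; [apply val0h; auto|].
  split; [apply val10; auto|].
  split; [apply val1h; auto|].
  split; [exact Hphi|].
  assert (Hipspan : forall mu nu c l, (mu <= 1)%nat -> (nu <= 1)%nat -> (l < Nhalf J)%nat ->
     ip J (shift2 (phi J r mu) l) (fun k => rsum (Nhalf J) (fun l' => c l' * shift2 (phi J r nu) l' k)) =
     if Nat.eqb mu nu then c l else 0).
  { intros mu nu c l Hmu Hnu Hl.
    rewrite (ip_lin_r J _ (Nhalf J) c (fun l' => shift2 (phi J r nu) l')).
    rewrite (rsum_ext _ _ (fun l' => c l' * (if Nat.eqb l l' then (if Nat.eqb mu nu then 1 else 0) else 0))).
    - destruct (Nat.eqb mu nu).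
      + apply rsum_delta'; auto.
      + rewrite (rsum_ext _ _ (fun _ => 0)). apply rsum_zero. intros; destruct (Nat.eqb l i); ring.
    - intros l' Hl'. rewrite Hort by auto. destruct (Nat.eqb mu nu), (Nat.eqb l l'); auto. }
  assert (Hipspan' : forall mu nu c l, (mu <= 1)%nat -> (nu <= 1)%nat -> (l < Nhalf J)%nat ->
     ip J (shift2 (phi J r mu) l) (fun k => rsum (Nhalf J) (fun l' => c l' * phi J r nu (k - 2 * Z.of_nat l')%Z)) =
     if Nat.eqb mu nu then c l else 0) by (intros; apply Hipspan; auto).
  split.
  - intros x Hx. split.
    + intros [c Hc] y [d Hd].
      rewrite (ip_ext J x _ y _ Hc Hd).
      rewrite ip_lin_l. rewrite (rsum_ext _ _ (fun _ => 0)). apply rsum_zero.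
      intros l Hl. change (fun k : Z => phi J r 1 (k - 2 * Z.of_nat l)%Z) with (shift2 (phi J r 1) l). rewrite (Hipspan' 1%nat 0%nat d l) by (auto; lia). simpl. ring.
    + intros Horth. destruct (Hspan x Hx) as [c0 [c1 Hc]].
      exists c1. intros k. rewrite Hc.
      assert (H0 : forall l, (l < Nhalf J)%nat -> c0 l = 0).
      { intros l Hl. rewrite <- (Horth (shift2 (phi J r 0) l)).
        2:{ exists (fun l' => if Nat.eqb l l' then 1 else 0). intros k'. unfold shift2.
            rewrite (rsum_ext _ _ (fun l' => phi J r 0 (k' - 2 * Z.of_nat l')%Z * (if Nat.eqb l l' then 1 else 0))).
            symmetry; apply (rsum_delta' _ (fun l' => phi J r 0 (k' - 2 * Z.of_nat l')%Z)); auto.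
            intros; ring. }
        rewrite ip_comm.
        rewrite (ip_ext J _ _ x (fun k => rsum (Nhalf J) (fun l0 => c0 l0 * shift2 (phi J r 0) l0 k)
              + rsum (Nhalf J) (fun l0 => c1 l0 * shift2 (phi J r 1) l0 k)) (fun _ => eq_refl) Hc).
        unfold ip. rewrite (rsum_ext _ _ (fun k => shift2 (phi J r 0) l (Z.of_nat k) *
              rsum (Nhalf J) (fun l0 => c0 l0 * shift2 (phi J r 0) l0 (Z.of_nat k)) +
              shift2 (phi J r 0) l (Z.of_nat k) *
              rsum (Nhalf J) (fun l0 => c1 l0 * shift2 (phi J r 1) l0 (Z.of_nat k)))) by (intros; ring).
        rewrite rsum_add. fold (ip J (shift2 (phi J r 0) l) (fun k => rsum (Nhalf J) (fun l0 => c0 l0 * shift2 (phi J r 0) l0 k))).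
        fold (ip J (shift2 (phi J r 0) l) (fun k => rsum (Nhalf J) (fun l0 => c1 l0 * shift2 (phi J r 1) l0 k))).
        rewrite !Hipspan by (auto; lia). simpl. ring. }
      rewrite (rsum_ext _ _ (fun _ => 0)). rewrite rsum_zero. unfold shift2. ring.
      intros l Hl. rewrite H0 by auto. ring.
  - intros mu x Hmu Hx. split.
    + exists (coef J r mu x). intros k. reflexivity.
    + intros y [d Hd]. rewrite (ip_ext J _ _ y _ (fun _ => eq_refl) Hd).
      rewrite ip_lin_r. rewrite (rsum_ext _ _ (fun _ => 0)). apply rsum_zero.
      intros l Hl.
      change (fun k : Z => phi J r mu (k - 2 * Z.of_nat l)%Z) with (shift2 (phi J r mu) l).
      assert (E1 : ip J (fun k => x k - proj J r mu x k) (shift2 (phi J r mu) l) =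
                   ip J x (shift2 (phi J r mu) l) - ip J (shift2 (phi J r mu) l) (proj J r mu x)).
      { rewrite (ip_comm J (shift2 _ _)). unfold ip.
        rewrite <- (Rplus_0_r (rsum (Nn J) (fun k => x (Z.of_nat k) * shift2 (phi J r mu) l (Z.of_nat k)))).
        rewrite <- (rsum_zero (Nn J)).
        transitivity (rsum (Nn J) (fun k => x (Z.of_nat k) * shift2 (phi J r mu) l (Z.of_nat k))
           + (-1) * rsum (Nn J) (fun k => proj J r mu x (Z.of_nat k) * shift2 (phi J r mu) l (Z.of_nat k))).
        2:{ rewrite rsum_zero. ring. }
        rewrite <- rsum_scal, <- rsum_add. apply rsum_ext; intros; ring. }
      rewrite E1. unfold proj. rewrite (Hipspan' mu mu (coef J r mu x) l) by auto. rewrite Nat.eqb_refl.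
      assert (E2 : ip J x (shift2 (phi J r mu) l) = coef J r mu x l).
      { unfold ip, coef, shift2. apply rsum_ext; intros; ring. }
      rewrite E2. ring.
Qed.
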